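(* Let $A$ be a non-empty set, $I$ a non-empty index set, $\{V_i\}_{i\in I}\subseteq\mathcal R(A)$, $E$ a fuzzy equivalence on $A$, and $(A/E,I,V_i^{A/E})$ the quotient fuzzy relational system of $(A,I,V_i)$ with respect to $E$. Let $E^\natural\in\mathcal R(A,A/E)$ be defined by $E^\natural(a_1,E_{a_2})=E(a_1,a_2)$. The following are equivalent: (i) $E$ is a solution to $WL^{1\text{-}4}(A,I,V_i)$; (ii) $E^\natural$ is a solution to $WL^{2\text{-}3}(A,A/E,I,V_i,V_i^{A/E})$; (iii) $E^\natural$ is a solution to $WL^{2\text{-}5}(A,A/E,I,V_i,V_i^{A/E})$.
   Context: $\mathcal L=(L,\wedge,\vee,\otimes,\to,0,1)$ is a complete residuated lattice. For non-empty sets $X,Y$, $\mathcal R(X,Y)$ is the set of fuzzy relations $X\times Y\to L$, $\mathcal R(X)=\mathcal R(X,X)$, ordered pointwise; $R^{-1}(y,x)=R(x,y)$; $(R\circ S)(x,t)=\bigvee_{y}R(x,y)\otimes S(y,t)$. A fuzzy equivalence $E$ on $A$ is reflexive ($E(a,a)=1$), symmetric and transitive ($E(a,b)\otimes E(b,c)\le E(a,c)$). $E_a(x)=E(a,x)$, $A/E=\{E_a:a\in A\}$, and $V_i^{A/E}(E_{a_1},E_{a_2})=(E\circ V_i\circ E)(a_1,a_2)$ (well defined). $WL^{1\text{-}4}(A,I,V_i)$ (unknown $U\in\mathcal R(A)$): $U\circ V_i\le V_i\circ U$ and $U^{-1}\circ V_i\le V_i\circ U^{-1}$ for all $i\in I$.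 For $\{W_i\}\subseteq\mathcal R(Q)$ and unknown $U\in\mathcal R(P,Q)$: $WL^{2\text{-}3}(P,Q,I,V_i,W_i)$: $U^{-1}\circ V_i\le W_i\circ U^{-1}$ and $U\circ W_i\le V_i\circ U$ for all $i\in I$; $WL^{2\text{-}5}(P,Q,I,V_i,W_i)$: $V_i\circ U=U\circ W_i$ for all $i\in I$. *)

(* Defs.v *)
From Stdlib Require Import ClassicalEpsilon.


Record CRL := {
  car :> Type;
  le : car -> car -> Prop;
  sup : (car -> Prop) -> car;
  inf : (car -> Prop) -> car;
  mul : car -> car -> car;
  res : car -> car -> car;
  zero : car;
  one : car;
  le_refl : forall x, le x x;
  le_trans : forall x y z, le x y -> le y z -> le x z;
  le_antisym : forall x y, le x y -> le y x -> x = y;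
  sup_ub : forall (S : car -> Prop) x, S x -> le x (sup S);
  sup_least : forall (S : car -> Prop) z, (forall x, S x -> le x z) -> le (sup S) z;
  inf_lb : forall (S : car -> Prop) x, S x -> le (inf S) x;
  inf_greatest : forall (S : car -> Prop) z, (forall x, S x -> le z x) -> le z (inf S);
  zero_le : forall x, le zero x;
  le_one : forall x, le x one;
  mulA : forall x y z, mul x (mul y z) = mul (mul x y) z;
  mulC : forall x y, mul x y = mul y x;
  mul1 : forall x, mul x one = x;
  adjoint : forall x y z, le (mul x y) z <-> le x (res y z)
}.

Arguments le {c} _ _.
Arguments sup {c} _.
Arguments inf {c} _.
Arguments mul {c} _ _.
Arguments res {c} _ _.

Set Implicit Arguments.
Section Fuzzy.
Variable L : CRL.

Definition join (x y : L) : L := sup (fun z => z = x \/ z = y).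
Definition meet (x y : L) : L := inf (fun z => z = x \/ z = y).

Definition frel (X Y : Type) := X -> Y -> L.

Definition rle (X Y : Type) (R S : frel X Y) : Prop :=
  forall x y, le (R x y) (S x y).

Definition rinv (X Y : Type) (R : frel X Y) : frel Y X := fun y x => R x y.

Definition rcomp (X Y Z : Type) (R : frel X Y) (S : frel Y Z) : frel X Z :=
  fun x t => sup (fun v => exists y, v = mul (R x y) (S y t)).

Definition fuzzy_equiv (A : Type) (E : frel A A) : Prop :=
  (forall a, E a a = one L) /\
  (forall a b, E a b = E b a) /\
  (forall a b c, le (mul (E a b) (E b c)) (E a c)).

Definition quot (A : Type) (E : frel A A) : Type :=
  { f : A -> L | exists a, f = E a }.

(** A chosen representative a of a class E_a (the constructions below
    do not depend on the choice when E is a fuzzy equivalence). *)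
Definition rep (A : Type) (E : frel A A) (p : quot E) : A :=
  proj1_sig (constructive_indefinite_description _ (proj2_sig p)).

Definition quot_rel (A : Type) (E : frel A A) (V : frel A A) : frel (quot E) (quot E) :=
  fun p q => rcomp (rcomp E V) E (rep p) (rep q).

Definition Enat (A : Type) (E : frel A A) : frel A (quot E) :=
  fun a1 p => E a1 (rep p).

Definition WL1_4 (A I : Type) (V : I -> frel A A) (U : frel A A) : Prop :=
  forall i, rle (rcomp U (V i)) (rcomp (V i) U) /\
            rle (rcomp (rinv U) (V i)) (rcomp (V i) (rinv U)).

Definition WL2_3 (P Q I : Type) (V : I -> frel P P) (W : I -> frel Q Q)
  (U : frel P Q) : Prop :=
  forall i, rle (rcomp (rinv U) (V i)) (rcomp (W i) (rinv U)) /\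
            rle (rcomp U (W i)) (rcomp (V i) U).

Definition WL2_5 (P Q I : Type) (V : I -> frel P P) (W : I -> frel Q Q)
  (U : frel P Q) : Prop :=
  forall i, rcomp (V i) U = rcomp U (W i).

End Fuzzy.

Arguments quot_rel {L A} E V _ _.
Arguments Enat {L A} E _ _.
Arguments WL1_4 {L A I} V U.
Arguments WL2_3 {L P Q I} V W U.
Arguments WL2_5 {L P Q I} V W U.
Arguments fuzzy_equiv {L A} E.

(* Main.v *)
Require Import Defs.
From Stdlib Require Import FunctionalExtensionality ClassicalEpsilon.

Section Aux.
Variable L : CRL.

Lemma mul_monol (x y z : L) : le x y -> le (mul x z) (mul y z).
Proof.
  intro H. apply adjoint. apply le_trans with y; auto.
  apply adjoint. apply le_refl.
Qed.

Lemma mul_monor (x y z : L) : le x y -> le (mul z x) (mul z y).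
Proof. intro H. rewrite (mulC _ z x), (mulC _ z y). now apply mul_monol. Qed.

Lemma comp_ub (X Y Z : Type) (R : frel L X Y) (S : frel L Y Z) x y t :
  le (mul (R x y) (S y t)) (rcomp R S x t).
Proof. apply sup_ub. exists y. reflexivity. Qed.

Lemma comp_lub (X Y Z : Type) (R : frel L X Y) (S : frel L Y Z) x t z :
  (forall y, le (mul (R x y) (S y t)) z) -> le (rcomp R S x t) z.
Proof. intro H. apply sup_least. intros v [y ->]. auto. Qed.

Lemma comp_mono (X Y Z : Type) (R R' : frel L X Y) (S S' : frel L Y Z) :
  rle R R' -> rle S S' -> rle (rcomp R S) (rcomp R' S').
Proof.
  intros H1 H2 x t. apply comp_lub. intro y.
  eapply le_trans; [apply mul_monol, H1|].
  eapply le_trans; [apply mul_monor, H2|]. apply comp_ub.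
Qed.

Lemma assoc_r (X Y Z W : Type) (R : frel L X Y) (S : frel L Y Z) (T : frel L Z W) :
  rle (rcomp (rcomp R S) T) (rcomp R (rcomp S T)).
Proof.
  intros x t. apply comp_lub. intro y. apply adjoint. apply comp_lub. intro w.
  apply (proj1 (adjoint _ (mul (R x w) (S w y)) (T y t) _)). rewrite <- mulA.
  eapply le_trans; [apply mul_monor, (comp_ub _ _ _ S T w y t)|]. apply comp_ub.
Qed.

Lemma assoc_l (X Y Z W : Type) (R : frel L X Y) (S : frel L Y Z) (T : frel L Z W) :
  rle (rcomp R (rcomp S T)) (rcomp (rcomp R S) T).
Proof.
  intros x t. apply comp_lub. intro y. rewrite mulC. apply adjoint. apply comp_lub. intro w.
  apply (proj1 (adjoint _ (mul (S y w) (T w t)) (R x y) _)). rewrite mulC, mulA.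
  eapply le_trans; [apply mul_monol, (comp_ub _ _ _ R S x y w)|]. apply comp_ub.
Qed.

Lemma rle_trans (X Y : Type) (R S T : frel L X Y) : rle R S -> rle S T -> rle R T.
Proof. intros H1 H2 x y. eapply le_trans; eauto. Qed.

Variable A : Type.
Variable E : frel L A A.
Hypothesis hE : fuzzy_equiv E.

Lemma Er a : E a a = one L. Proof. apply hE. Qed.
Lemma Es a b : E a b = E b a. Proof. apply hE. Qed.
Lemma Et a b c : le (mul (E a b) (E b c)) (E a c). Proof. apply hE. Qed.

Lemma R_le_RE (X : Type) (R : frel L X A) : rle R (rcomp R E).
Proof. intros x t. rewrite <- (mul1 _ (R x t)), <- (Er t) at 1. apply comp_ub. Qed.

Lemma R_le_ER (X : Type) (R : frel L A X) : rle R (rcomp E R).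
Proof. intros x t. rewrite <- (mul1 _ (R x t)), mulC, <- (Er x). apply comp_ub. Qed.

Lemma EE_le : rle (rcomp E E) E.
Proof. intros x t. apply comp_lub. intro; apply Et. Qed.

Lemma EES_le (X : Type) (S : frel L A X) : rle (rcomp E (rcomp E S)) (rcomp E S).
Proof.
  eapply rle_trans; [apply assoc_l|]. apply comp_mono; [apply EE_le|intros ??; apply le_refl].
Qed.

Lemma SEE_le (X : Type) (S : frel L X A) : rle (rcomp (rcomp S E) E) (rcomp S E).
Proof.
  eapply rle_trans; [apply assoc_r|]. apply comp_mono; [intros ??; apply le_refl|apply EE_le].
Qed.


Lemma Eeq a t t' : E t = E t' -> E a t = E a t'.
Proof. intro H. rewrite (Es a t), (Es a t'), H. reflexivity. Qed.

Lemma cls_r (X : Type) (R : frel L X A) x t t' : E t = E t' -> rcomp R E x t = rcomp R E x t'.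
Proof.
  intro H. unfold rcomp. f_equal. apply functional_extensionality. intro v.
  f_equal. apply functional_extensionality. intro y. rewrite (Eeq y t t' H). reflexivity.
Qed.

Lemma cls_l (X : Type) (R : frel L A X) x t t' : E t = E t' -> rcomp E R t x = rcomp E R t' x.
Proof. intro H. unfold rcomp. rewrite H. reflexivity. Qed.

Definition cls (a : A) : quot E := exist _ (E a) (ex_intro _ a eq_refl).

Lemma rep_spec (p : quot E) : E (rep p) = proj1_sig p.
Proof.
  unfold rep. destruct (constructive_indefinite_description _ _) as [b Hb]. simpl.
  symmetry; exact Hb.
Qed.

Lemma rep_cls a : E (rep (cls a)) = E a.
Proof. apply rep_spec. Qed.


Variable V : frel L A A.

Lemma P1 : rle (rcomp (rinv (Enat E)) V) (rcomp (quot_rel E V) (rinv (Enat E))).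
Proof.
  intros p a. apply comp_lub. intro x.
  apply le_trans with (rcomp (rcomp E V) E (rep p) a).
  - unfold rinv, Enat. rewrite (Es x (rep p)).
    eapply le_trans; [apply (comp_ub _ _ _ E V)|]. apply R_le_RE.
  - eapply le_trans; [|apply (comp_ub _ _ _ (quot_rel E V) (rinv (Enat E)) p (cls a) a)].
    unfold quot_rel, rinv, Enat.
    rewrite (Eeq a _ _ (rep_cls a)), Er, mul1.
    rewrite (cls_r _ _ _ _ _ (rep_cls a)). apply le_refl.
Qed.

Lemma K a q : rcomp (Enat E) (quot_rel E V) a q = rcomp (rcomp E V) E a (rep q).
Proof.
  apply le_antisym.
  - apply comp_lub. intro p. unfold Enat, quot_rel.
    eapply le_trans; [apply (comp_ub _ _ _ E (rcomp (rcomp E V) E))|].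
    eapply le_trans; [apply (comp_mono _ _ _ _ _ _ _ (fun _ _ => le_refl _ _) (assoc_r _ _ _ _ E V E))|].
    eapply le_trans; [apply EES_le|]. apply assoc_l.
  - eapply le_trans; [|apply (comp_ub _ _ _ (Enat E) (quot_rel E V) a (cls a) q)].
    unfold Enat, quot_rel.
    rewrite (Eeq a _ _ (rep_cls a)), Er, mulC, mul1.
    eapply le_trans; [apply assoc_r|].
    rewrite <- (cls_l _ _ (rep q) _ _ (rep_cls a)). apply assoc_l.
Qed.

Lemma C2 : rle (rcomp (Enat E) (quot_rel E V)) (rcomp V (Enat E)) <->
           rle (rcomp E V) (rcomp V E).
Proof.
  split.
  - intros H a b. eapply le_trans; [apply R_le_RE|].
    rewrite <- (cls_r _ _ _ _ _ (rep_cls b)), <- K.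
    eapply le_trans; [apply H|]. change (le (rcomp V E a (rep (cls b))) (rcomp V E a b)).
    rewrite (cls_r _ _ _ _ _ (rep_cls b)). apply le_refl.
  - intros H a q. rewrite K. change (le (rcomp (rcomp E V) E a (rep q)) (rcomp V E a (rep q))).
    eapply le_trans; [apply (comp_mono _ _ _ _ _ _ _ H (fun _ _ => le_refl _ _))|]. apply SEE_le.
Qed.

Lemma C5 : rcomp V (Enat E) = rcomp (Enat E) (quot_rel E V) <->
           rle (rcomp (Enat E) (quot_rel E V)) (rcomp V (Enat E)).
Proof.
  split.
  - intros H a q. rewrite H. apply le_refl.
  - intro H. apply functional_extensionality. intro a.
    apply functional_extensionality. intro q. apply le_antisym; [|apply H].
    rewrite K. change (le (rcomp V E a (rep q)) (rcomp (rcomp E V) E a (rep q))).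
    eapply le_trans; [apply R_le_ER|]. apply assoc_l.
Qed.

End Aux.

Theorem theorem6p2 (L : CRL) (A I : Type) (hA : inhabited A) (hI : inhabited I)
  (V : I -> frel L A A) (E : frel L A A) (hE : fuzzy_equiv E) :
  (WL1_4 V E <-> WL2_3 V (fun i => quot_rel E (V i)) (Enat E)) /\
  (WL2_3 V (fun i => quot_rel E (V i)) (Enat E) <->
   WL2_5 V (fun i => quot_rel E (V i)) (Enat E)).
Proof.
  unfold WL1_4, WL2_3, WL2_5. split; split; intros H i.
  - split; [apply (P1 _ _ _ hE)|]. apply (proj2 (C2 _ _ _ hE (V i))). apply (H i).
  - assert (H2 : rle (rcomp E (V i)) (rcomp (V i) E)) by apply (proj1 (C2 _ _ _ hE (V i)) (proj2 (H i))).
    split; [exact H2|].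
    intros x y. unfold rinv. 
    assert (HE : (fun a b => E b a) = E).
    { apply functional_extensionality; intro a; apply functional_extensionality; intro b.
      apply (Es _ _ _ hE). }
    rewrite HE. apply H2.
  - apply (proj2 (C5 _ _ _ hE (V i))). apply (H i).
  - split; [apply (P1 _ _ _ hE)|]. apply (proj1 (C5 _ _ _ hE (V i))). apply (H i).
Qed.
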